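(* There exists a probability density $f$ supported on $[0,\infty)$ such that $f\in\mathcal{L}_0\setminus\mathcal{S}_0$ and $f$ is not almost decreasing.
   Context: For a probability density $f$ on $[0,\infty)$: $f\in\mathcal{L}_0$ (long-tailed density) if $f(x)>0$ for all sufficiently large $x$ and for every constant $t\in\mathbb{R}$, $f(x+t)\sim f(x)$ as $x\to\infty$ (where $a(x)\sim b(x)$ means $a(x)/b(x)\to1$). $f\in\mathcal{S}_0$ (subexponential density) if $f\in\mathcal{L}_0$ and $\int_0^x f(x-y)f(y)\,dy\sim 2f(x)$ as $x\to\infty$. The density $f$ is called almost decreasing if there exists a constant $x_0\ge 0$ such that $f(x)>0$ for all $x\ge x_0$ and $\sup_{x_0\le x\le y<\infty} f(y)/f(x)<\infty$. *)

(* Defs.v *)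
From HB Require Import structures.
From mathcomp Require Import all_boot all_order all_algebra.
From mathcomp Require Import all_classical all_reals all_analysis.
Set Implicit Arguments. Unset Strict Implicit. Unset Printing Implicit Defensive.
Import Order.TTheory GRing.Theory Num.Theory.
Import numFieldNormedType.Exports.
Local Open Scope classical_set_scope.
Local Open Scope ring_scope.

Section Defs.
Variable R : realType.

Definition density_on_nonneg (f : R -> R) : Prop :=
  measurable_fun setT f /\
  (forall x, 0 <= f x) /\
  (forall x, x < 0 -> f x = 0) /\
  (\int[@lebesgue_measure R]_(x in `[0%R, +oo[%classic) (f x)%:E = 1)%E.

Definition asym_equiv (a b : R -> R) : Prop :=
  (a x / b x) @[x --> +oo] --> (1 : R).

Definition long_tailed (f : R -> R) : Prop :=
  (exists x0 : R, forall x, x0 <= x -> 0 < f x) /\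
  (forall t : R, asym_equiv (fun x => f (x + t)) f).

Definition conv0 (f : R -> R) (x : R) : \bar R :=
  (\int[@lebesgue_measure R]_(y in `[0%R, x]%classic) (f (x - y) * f y)%:E)%E.

Definition subexponential (f : R -> R) : Prop :=
  long_tailed f /\
  (\forall x \near +oo, conv0 f x \is a fin_num) /\
  asym_equiv (fun x => fine (conv0 f x)) (fun x => 2 * f x).

Definition almost_decreasing (f : R -> R) : Prop :=
  exists x0 : R, 0 <= x0 /\ (forall x, x0 <= x -> 0 < f x) /\
    exists M : R, forall x y, x0 <= x -> x <= y -> f y / f x <= M.

End Defs.

(* Main.v *)
From HB Require Import structures.
From mathcomp Require Import all_boot all_order all_algebra.
From mathcomp Require Import all_classical all_reals all_analysis.
From mathcomp Require Import ring lra measurable_realfun.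
Require Import Defs.
Set Implicit Arguments. Unset Strict Implicit. Unset Printing Implicit Defensive.
Import Order.TTheory GRing.Theory Num.Theory.
Import numFieldNormedType.Exports.
Local Open Scope classical_set_scope.
Local Open Scope ring_scope.

Section Construction.
Variable R : realType.
Notation mu := (@lebesgue_measure R).

Definition c0 : R := ln (3/2).
Definition kap : R := pi / (2 * c0).
Definition LL (x : R) : R := ln (`|x| + 1).
Definition MM (x : R) : R := Num.max 0 (sin (kap * LL x)).
Definition EE (x : R) : R := 2 + 2 * MM x.
Definition hh (x : R) : R := expR (- (EE x * LL x)).
Lemma c0_gt0 : 0 < c0.
Proof. by apply: ln_gt0; lra. Qed.

Lemma expc0 : expR c0 = 3/2.
Proof. by rewrite /c0 lnK// posrE; lra. Qed.

Lemma kapc0 : kap * c0 = pi / 2.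
Proof. have := c0_gt0 => h; rewrite /kap; field; lra. Qed.

Lemma LL_ge0 x : 0 <= LL x.
Proof. by apply: ln_ge0; rewrite lerDr. Qed.

Lemma MM_ge0 x : 0 <= MM x.
Proof. by rewrite /MM le_max lexx. Qed.

Lemma MM_le1 x : MM x <= 1.
Proof. by rewrite /MM ge_max ler01 sin_le1. Qed.

Lemma measurable_LL : measurable_fun setT LL.
Proof.
apply: measurableT_comp; first exact: measurable_ln.
apply: measurable_funD; first exact: normr_measurable.
exact: measurable_cst.
Qed.

Lemma measurable_hh : measurable_fun setT hh.
Proof.
apply: measurableT_comp; first exact: measurable_expR.
apply: measurableT_comp; first by apply: measurable_funN.
apply: measurable_funM; last exact: measurable_LL.
apply: measurable_funD; first exact: measurable_cst.
apply: measurable_funM; first exact: measurable_cst.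
apply: measurable_maxr; first exact: measurable_cst.
apply: measurableT_comp; first by apply: continuous_measurable_fun; exact: continuous_sin.
apply: measurable_funM; first exact: measurable_cst.
exact: measurable_LL.
Qed.
Lemma LL_nneg x : 0 <= x -> LL x = ln (x + 1).
Proof. by move=> x0; rewrite /LL ger0_norm. Qed.

Lemma hh_gt0 x : 0 < hh x.
Proof. exact: expR_gt0. Qed.

Lemma EE_ge2 x : 2 <= EE x.
Proof. by rewrite /EE lerDl mulr_ge0// MM_ge0. Qed.

Lemma EE_le4 x : EE x <= 4.
Proof. have := MM_le1 x; rewrite /EE; lra. Qed.

Lemma hh_le2 x : hh x <= expR (- (2 * LL x)).
Proof.
rewrite ler_expR lerN2 ler_wpM2r ?LL_ge0//; exact: EE_ge2.
Qed.

Lemma hh_ge4 x : expR (- (4 * LL x)) <= hh x.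
Proof.
rewrite ler_expR lerN2 ler_wpM2r ?LL_ge0//; exact: EE_le4.
Qed.

Lemma expRnLL (n : nat) x : expR (- (n%:R * LL x)) = ((`|x| + 1) ^+ n)^-1.
Proof.
rewrite expRN expRM_natl /LL lnK// posrE; exact: ltr_wpDl.
Qed.

Lemma hh_le_oneDsqr x : 0 <= x -> hh x <= (oneDsqr x)^-1.
Proof.
move=> x0; apply: (le_trans (hh_le2 x)).
rewrite (expRnLL 2) ger0_norm// lef_pV2 ?posrE /oneDsqr.
- rewrite !expr2; nra.
- by apply: exprn_gt0; lra.
- by apply: (lt_le_trans ltr01); exact: oneDsqr_ge1.
Qed.

Lemma hh_zero x : sin (kap * LL x) <= 0 -> hh x = expR (- (2 * LL x)).
Proof. by move=> s0; rewrite /hh /EE /MM max_l// mulr0 addr0. Qed.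

Lemma hh_peak x : sin (kap * LL x) = 1 -> hh x = expR (- (4 * LL x)).
Proof.
move=> s1; rewrite /hh /EE /MM s1 max_r ?ler01//.
have e : (2 + 2 * 1 : R) = 4 by lra.
by rewrite e.
Qed.
Definition JJ := (\int[mu]_(x in `[0%R, +oo[) (hh x)%:E)%E.
Definition II := fine JJ.

Lemma mEhh D : measurable_fun D (fun x => (hh x)%:E).
Proof. by apply/measurable_EFinP; apply: measurable_funTS; exact: measurable_hh. Qed.

Lemma JJ_le : (JJ <= (pi / 2)%:E)%E.
Proof.
rewrite /JJ -integral0y_oneDsqr.
apply: ge0_le_integral => //.
- by move=> x _; rewrite lee_fin ltW// hh_gt0.
- exact: mEhh.
- apply/measurable_EFinP; apply: measurable_funTS.
  by apply: continuous_measurable_fun; exact: continuous_oneDsqrV.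
- move=> x /=; rewrite in_itv/= andbT => x0.
  by rewrite lee_fin hh_le_oneDsqr.
Qed.

Lemma JJ_ge : ((expR (- (4 * ln 2)))%:E <= JJ)%E.
Proof.
apply: (@le_trans _ _ (\int[mu]_(x in `[0%R, 1%R]) (hh x)%:E)%E); last first.
  apply: ge0_subset_integral => //.
  - exact: mEhh.
  - by move=> x _; rewrite lee_fin ltW// hh_gt0.
  - by move=> x /=; rewrite !in_itv/= => /andP[-> _].
apply: (@le_trans _ _ (\int[mu]_(x in `[0%R, 1%R]) (cst (expR (- (4 * ln 2)))%:E x))%E).
  rewrite integral_cst//= lebesgue_measure_itv/= lte_fin ltr01.
  by rewrite -EFinD subr0 mule1.
apply: ge0_le_integral => //.
- by move=> x _; rewrite lee_fin expR_ge0.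
- exact: mEhh.
- move=> x /=; rewrite in_itv/= => /andP[x0 x1].
  rewrite lee_fin; apply: le_trans (hh_ge4 x).
  rewrite ler_expR lerN2 ler_pM2l// LL_nneg// ler_ln ?posrE; lra.
Qed.

Lemma JJ_fin : JJ = II%:E.
Proof.
rewrite /II fineK//; apply/fin_numPlt; apply/andP; split.
- exact: (lt_le_trans (ltNyr _) JJ_ge).
- exact: (le_lt_trans JJ_le (ltry _)).
Qed.

Lemma II_gt0 : 0 < II.
Proof.
have := JJ_ge; rewrite JJ_fin lee_fin => h.
exact: (lt_le_trans (expR_gt0 _) h).
Qed.
Lemma divII a b : a / II / (b / II) = a / b.
Proof. by rewrite invf_div mulrA divfK// gt_eqF// II_gt0. Qed.

Definition ff (x : R) : R := if 0 <= x then hh x / II else 0.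

Lemma ff_nneg x : 0 <= x -> ff x = hh x / II.
Proof. by move=> x0; rewrite /ff x0. Qed.

Lemma ff_gt0 x : 0 <= x -> 0 < ff x.
Proof. by move=> x0; rewrite ff_nneg// divr_gt0// ?hh_gt0// II_gt0. Qed.

Lemma density_ff : density_on_nonneg ff.
Proof.
split; [|split; [|split]].
- apply: measurable_fun_ifT.
  + apply: measurable_fun_ler; first exact: measurable_cst.
    exact: measurable_id.
  + apply: measurable_funM; first exact: measurable_hh.
    exact: measurable_cst.
  + exact: measurable_cst.
- move=> x; rewrite /ff; case: ifP => // _.
  by rewrite divr_ge0// ltW// ?hh_gt0// II_gt0.
- by move=> x x0; rewrite /ff ifF//; apply/negbTE; rewrite -ltNge.
- transitivity (\int[mu]_(x in `[0%R, +oo[) ((II^-1)%:E * (hh x)%:E))%E.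
    apply: eq_integral => x; rewrite inE/= in_itv/= andbT => x0.
    by rewrite ff_nneg// mulrC EFinM.
  rewrite ge0_integralZl//.
  + by rewrite -/JJ JJ_fin -EFinM mulVf// gt_eqF// II_gt0.
  + exact: mEhh.
  + by move=> x _; rewrite lee_fin ltW// hh_gt0.
  + by rewrite lee_fin invr_ge0 ltW// II_gt0.
Qed.
Lemma kap_s (k : nat) : kap * (4 * k%:R * c0) = pi *+ 2 *+ k.
Proof.
rewrite -mulrnA -[pi *+ _]mulr_natr natrM.
have h := kapc0.
transitivity (4 * k%:R * (kap * c0)); first ring.
by rewrite h; field.
Qed.

Lemma sin_per (k : nat) v : sin (v + kap * (4 * k%:R * c0)) = sin v.
Proof. by rewrite kap_s periodicn//; exact: sinD2pi. Qed.

Lemma LL_expR1 a : 0 <= a -> LL (expR a - 1) = a.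
Proof.
move=> a0; rewrite LL_nneg ?subrK ?expRK//.
by rewrite subr_ge0 -expR0 ler_expR.
Qed.

Lemma zero_region (k : nat) z : 0 <= z ->
  expR (4 * k%:R * c0 - 2 * c0) <= z + 1 -> z + 1 <= expR (4 * k%:R * c0) ->
  hh z = expR (- (2 * LL z)).
Proof.
move=> z0 lo hi; apply: hh_zero.
have z1 : 0 < z + 1 by lra.
have := lo; rewrite -(lnK z1) ?posrE// ler_expR => lo'.
have := hi; rewrite -(lnK z1) ?posrE// ler_expR => hi'.
rewrite LL_nneg//.
set v := kap * ln (z + 1) - kap * (4 * k%:R * c0).
have -> : kap * ln (z + 1) = v + kap * (4 * k%:R * c0) by rewrite /v subrK.
rewrite sin_per.
have kp : 0 < kap by rewrite /kap divr_gt0// ?pi_gt0// mulr_gt0// c0_gt0.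
have v0 : v <= 0.
  by rewrite /v subr_le0 ler_pM2l.
have vpi : - pi <= v.
  have h : kap * (2 * c0) = pi by have := kapc0; move=> e; rewrite mulrCA e; field.
  rewrite /v -h -mulrBr -mulrN ler_pM2l//; lra.
rewrite -[v]opprK sinN oppr_le0; apply: sin_ge0_pi; apply/andP; split; lra.
Qed.

Lemma peak_pt (k : nat) :
  hh (expR (4 * k%:R * c0 + c0) - 1) = expR (- (4 * (4 * k%:R * c0 + c0))).
Proof.
have s0 : 0 <= 4 * k%:R * c0 + c0 by rewrite addr_ge0// ?mulr_ge0// ltW// c0_gt0.
rewrite hh_peak LL_expR1 //.
by rewrite mulrDr kapc0 addrC sin_per sin_pihalf.
Qed.

Lemma pt2 (k : nat) :
  hh (expR (4 * k%:R * c0 + 2 * c0) - 1) = expR (- (2 * (4 * k%:R * c0 + 2 * c0))).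
Proof.
have s0 : 0 <= 4 * k%:R * c0 + 2 * c0.
  by rewrite addr_ge0// ?mulr_ge0// ltW// c0_gt0.
rewrite hh_zero LL_expR1 //.
have -> : kap * (4 * k%:R * c0 + 2 * c0) = pi + kap * (4 * k%:R * c0).
  have := kapc0 => e; rewrite mulrDr addrC; congr (_ + _).
  by rewrite mulrCA e; field.
by rewrite sin_per sinpi.
Qed.
Lemma big_k (B : R) : exists k : nat, B < 4 * k%:R * c0.
Proof.
have c0p := c0_gt0.
have B0 : 0 <= `|B| / (4 * c0) by rewrite divr_ge0// mulr_ge0// ltW.
exists (Num.Def.archi_bound (`|B| / (4 * c0))).
have hK := archi_boundP B0.
set K := Num.Def.archi_bound _ in hK *.
have c4 : 0 < 4 * c0 by rewrite mulr_gt0.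
have := hK; rewrite -(ltr_pM2r c4) divfK ?gt_eqF// => h.
apply: (le_lt_trans (ler_norm B)).
by have -> : 4 * K%:R * c0 = K%:R * (4 * c0) by ring.
Qed.

Lemma not_ad_ff : ~ almost_decreasing ff.
Proof.
move=> [x0 [x00 [pos [M HM]]]].
have c0p := c0_gt0.
have [k hk] := big_k (x0 + `|M|).
set s := 4 * k%:R * c0 in hk.
have s0 : 0 <= s by have := normr_ge0 M; lra.
set x := expR (s + c0) - 1.
set y := expR (s + 2 * c0) - 1.
have hx : s + c0 <= x by rewrite /x lerBrDr addrC; exact: expR_ge1Dx.
have x0x : x0 <= x by have := normr_ge0 M; lra.
have xy : x <= y.
  have e : expR (s + c0) <= expR (s + 2 * c0) by rewrite ler_expR; lra.
  by rewrite /x /y; lra.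
have := HM x y x0x xy.
have xn : 0 <= x by lra.
rewrite !ff_nneg//; last by lra.
have ex : hh x = expR (- (4 * (s + c0))) by exact: peak_pt.
have ey : hh y = expR (- (2 * (s + 2 * c0))) by exact: pt2.
rewrite ex ey divII.
rewrite -expRB.
have -> : - (2 * (s + 2 * c0)) - - (4 * (s + c0)) = 2 * s by ring.
move=> h.
have := expR_ge1Dx (2 * s).
have := ler_norm M.
lra.
Qed.
Lemma sin_lip (a b : R) : `|sin a - sin b| <= `|a - b|.
Proof.
wlog ab : a b / a <= b.
  move=> H; have [h|h] := leP a b; first exact: H.
  by rewrite distrC (distrC a); apply: H; exact: ltW.
move: ab; rewrite le_eqVlt => /predU1P[->|ab]; first by rewrite !subrr normr0.
have [c _ hc] := @MVT R sin cos a b ab (fun x _ => is_derive_sin x)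
  (continuous_subspaceT (fun x => @continuous_sin R x)).
rewrite distrC hc normrM distrC ler_piMl//; exact: cos_max.
Qed.

Lemma max0_lip (u v : R) : `|Num.max 0 u - Num.max 0 v| <= `|u - v|.
Proof.
have h1 := ler_norm (u - v).
have h2 := ler_norm (v - u); rewrite distrC in h2.
rewrite ler_norml.
have [hu|hu] := leP u 0; have [hv|hv] := leP v 0;
  rewrite ?(max_l hu) ?(max_l hv) ?(max_r (ltW hu)) ?(max_r (ltW hv));
  apply/andP; split; lra.
Qed.

Lemma ln_sub_le (a b : R) : 0 < a -> 0 < b -> ln a - ln b <= (a - b) / b.
Proof.
move=> a0 b0.
rewrite -ln_div ?posrE//.
have -> : a / b = 1 + (a - b) / b by field; rewrite gt_eqF.
apply: le_ln1Dx.
have : 0 < a / b by exact: divr_gt0.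
have -> : a / b = 1 + (a - b) / b by field; rewrite gt_eqF.
lra.
Qed.
Definition GG x := EE x * LL x.

Lemma kap_gt0 : 0 < kap.
Proof. by rewrite /kap divr_gt0// ?pi_gt0// mulr_gt0// c0_gt0. Qed.

Lemma GG_diff (x y : R) : `|GG y - GG x| <= (4 + 2 * kap * LL x) * `|LL y - LL x|.
Proof.
have -> : GG y - GG x = EE y * (LL y - LL x) + (EE y - EE x) * LL x.
  by rewrite /GG; ring.
have hE : `|EE y| <= 4.
  by rewrite ger0_norm ?EE_le4//; apply: le_trans (EE_ge2 y).
have hM : `|EE y - EE x| <= 2 * kap * `|LL y - LL x|.
  have -> : EE y - EE x = 2 * (MM y - MM x) by rewrite /EE; ring.
  rewrite normrM ger0_norm// -mulrA ler_pM2l//.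
  apply: (le_trans (max0_lip _ _)); apply: (le_trans (sin_lip _ _)).
  by rewrite -mulrBr normrM gtr0_norm// kap_gt0.
apply: (le_trans (ler_normD _ _)).
rewrite normrM normrM (ger0_norm (LL_ge0 x)) mulrDl.
apply: lerD; first by apply: ler_wpM2r.
have := LL_ge0 x => L0.
rewrite [2 * kap * LL x * _]mulrAC.
by apply: ler_wpM2r.
Qed.

Lemma LL_diff (t x : R) : 0 <= x -> 2 * `|t| <= x ->
  `|LL (x + t) - LL x| <= 2 * `|t| / (x + 1).
Proof.
move=> x0 xt.
have ht := ler_norm t; have ht' := ler_norm (- t); rewrite normrN in ht'.
have xt0 : 0 <= x + t by lra.
rewrite !LL_nneg//.
have a0 : 0 < x + t + 1 by lra.
have b0 : 0 < x + 1 by lra.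
rewrite ler_norml; apply/andP; split.
- rewrite lerNl opprB.
  apply: (le_trans (ln_sub_le b0 a0)).
  have -> : (x + 1 - (x + t + 1)) = - t by ring.
  rewrite ler_pdivrMr// mulrAC ler_pdivlMr//.
  have : 0 <= `|t| by exact: normr_ge0.
  nra.
- apply: (le_trans (ln_sub_le a0 b0)).
  have -> : (x + t + 1 - (x + 1)) = t by ring.
  rewrite ler_pM2r ?invr_gt0//.
  have : 0 <= `|t| by exact: normr_ge0.
  lra.
Qed.
Lemma LL_sqrt (x : R) : 0 <= x -> LL x <= 2 * Num.sqrt (x + 1).
Proof.
move=> x0; rewrite LL_nneg//.
have y0 : 0 < x + 1 by lra.
have r0 : 0 < Num.sqrt (x + 1) by rewrite sqrtr_gt0.
rewrite -{1}(sqr_sqrtr (ltW y0)) lnXn// mulr2n.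
have := ln_sublinear r0; lra.
Qed.

Lemma GG_small (t e : R) : 0 < e -> exists B, forall x, B < x -> `|GG (x + t) - GG x| < e.
Proof.
move=> e0.
have kp := kap_gt0.
set C := 8 * (1 + kap) * (`|t| + 1).
have tn0 := normr_ge0 t.
have C0 : 0 < C by rewrite /C; apply: mulr_gt0; [apply: mulr_gt0|]; lra.
exists (Num.max (2 * `|t|) ((C / e) ^+ 2)) => x.
rewrite gt_max => /andP[xt xC].
have tn := normr_ge0 t.
have x0 : 0 <= x by lra.
apply: (le_lt_trans (GG_diff _ _)).
have hL := LL_diff x0 (ltW xt).
have hS := LL_sqrt x0.
set r := Num.sqrt (x + 1) in hS.
have rr : r ^+ 2 = x + 1 by rewrite /r sqr_sqrtr//; lra.
have r0 : 0 <= r by exact: sqrtr_ge0.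
have r1 : 1 <= r.
  rewrite leNgt; apply/negP => h; have : r ^+ 2 < 1 by rewrite expr2; nra.
  lra.
set D := `|LL (x + t) - LL x| in hL *.
have D0 : 0 <= D by exact: normr_ge0.
have L0 := LL_ge0 x.
have hD : D * r ^+ 2 <= 2 * `|t|.
  by rewrite rr -ler_pdivlMr//; lra.
have rC : C / e < r.
  rewrite ltNge; apply/negP => h.
  have Ce : 0 <= C / e by rewrite divr_ge0// ltW.
  have : r ^+ 2 <= (C / e) ^+ 2 by rewrite !expr2; nra.
  lra.
have rC' : C < e * r by rewrite -ltr_pdivrMl// mulrC.
have h1 : (4 + 2 * kap * LL x) * D <= (4 + 4 * kap * r) * D.
  by apply: ler_wpM2r => //; nra.
apply: (le_lt_trans h1).
have h2 : (4 + 4 * kap * r) * D * r <= C.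
  rewrite /C.
  have : (4 + 4 * kap * r) * D * r <= 4 * (1 + kap) * r * D * r.
    by apply: ler_wpM2r => //; apply: ler_wpM2r => //; nra.
  move=> h; apply: (le_trans h).
  have -> : 4 * (1 + kap) * r * D * r = 4 * (1 + kap) * (D * r ^+ 2) by rewrite expr2; ring.
  have k1 : 0 <= 4 * (1 + kap) by lra.
  have : 4 * (1 + kap) * (D * r ^+ 2) <= 4 * (1 + kap) * (2 * `|t|) by apply: ler_wpM2l.
  nra.
have rp : 0 < r by lra.
rewrite -(ltr_pM2r rp); apply: (le_lt_trans h2); lra.
Qed.
Lemma long_tailed_ff : long_tailed ff.
Proof.
split; first by exists 0 => x; exact: ff_gt0.
move=> t; rewrite /asym_equiv.
have Hu : (GG x - GG (x + t)) @[x --> +oo] --> (0 : R).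
  apply/cvgrPdist_lt => e e0.
  have [B HB] := GG_small t e0.
  exists B; split => [|x Hx]; first exact: num_real.
  by rewrite sub0r normrN distrC; exact: HB.
have H2 : (expR (GG x - GG (x + t))) @[x --> +oo] --> expR (0 : R).
  apply: (cvg_comp _ _ Hu); exact: continuous_expR.
rewrite expR0 in H2.
apply: (cvg_trans _ H2); apply: near_eq_cvg.
exists (2 * `|t|); split => [|x Hx]; first exact: num_real.
have tn := normr_ge0 t.
have ht := ler_norm t; have ht' := ler_norm (- t); rewrite normrN in ht'.
have x0 : 0 <= x by lra.
have xt0 : 0 <= x + t by lra.
rewrite /= !ff_nneg//.
rewrite divII.
by rewrite /hh -expRB -/(GG x) -/(GG (x + t)) opprK addrC.
Qed.

Lemma measurable_ff : measurable_fun setT ff.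
Proof. by case: density_ff. Qed.

Lemma expR_s2 (s : R) : expR (s - 2 * c0) = expR s * (4 / 9).
Proof.
rewrite expRB (expRM_natl 2) expc0.
have -> : (3 / 2 : R) ^+ 2 = 9 / 4 by rewrite expr2; field.
by rewrite invf_div.
Qed.

Lemma hh_sq z : 0 <= z -> expR (- (2 * LL z)) = ((z + 1) ^+ 2)^-1.
Proof. by move=> z0; rewrite (expRnLL 2) ger0_norm. Qed.

Lemma ff_ge0 x : 0 <= ff x.
Proof. by case: density_ff => _ [h _]. Qed.

Lemma conv_lb (k : nat) : 10 * II + 10 <= expR (4 * k%:R * c0) ->
  ((3 * ff (expR (4 * k%:R * c0 + c0) - 1))%:E <=
   conv0 ff (expR (4 * k%:R * c0 + c0) - 1))%E.
Proof.
set s := 4 * k%:R * c0.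
set q := expR s.
move=> hq.
have IIp := II_gt0.
have q10 : 10 <= q by lra.
have qp : 0 < q by lra.
have ex : expR (s + c0) - 1 = 3 / 2 * q - 1 by rewrite expRD expc0 mulrC.
rewrite ex.
set x := 3 / 2 * q - 1.
set cL := ((q ^+ 2)^-1 / II) ^+ 2.
have mI : measurable_fun `[0, x]%classic (fun y => (ff (x - y) * ff y)%:E).
  apply/measurable_EFinP; apply: measurable_funTS.
  apply: measurable_funM.
    apply: measurableT_comp; first exact: measurable_ff.
    by apply: measurable_funB; [exact: measurable_cst|exact: measurable_id].
  exact: measurable_ff.
have zr z : 3 / 5 * q <= z + 1 -> z + 1 <= q -> ((q ^+ 2)^-1 / II) <= ff z.
  move=> lo hi.
  have z0 : 0 <= z by lra.
  rewrite ff_nneg// ler_pM2r ?invr_gt0//.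
  rewrite (@zero_region k z z0); first 1 last.
  - by rewrite expR_s2 -/s -/q; lra.
  - by [].
  rewrite hh_sq// lef_pV2 ?posrE ?exprn_gt0//; last lra.
  rewrite !expr2; nra.
apply: (@le_trans _ _ (\int[mu]_(y in `[(3 / 5 * q - 1)%R, (9 / 10 * q - 1)%R]) (ff (x - y) * ff y)%:E)%E); last first.
  apply: ge0_subset_integral => //.
  - by move=> y _; rewrite lee_fin mulr_ge0// ff_ge0.
  - move=> y; rewrite /= !in_itv/= /x => /andP[y1 y2]; apply/andP; split; lra.
apply: (@le_trans _ _ (\int[mu]_(y in `[(3 / 5 * q - 1)%R, (9 / 10 * q - 1)%R]) (cst cL%:E y))%E).
  rewrite integral_cst//= lebesgue_measure_itv/= lte_fin ifT; last by lra.
  rewrite -EFinB -EFinM lee_fin.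
  have -> : 9 / 10 * q - 1 - (3 / 5 * q - 1) = 3 / 10 * q by field.
  rewrite ff_nneg; last by rewrite /x; lra.
  have hx : hh x <= (q ^+ 4)^-1.
    rewrite /x -ex peak_pt -/s -/q.
    rewrite -(expRM_natl 4) -expRN ler_expR; have := c0_gt0; lra.
  rewrite /cL.
  have aq : q^-1 * q = 1 by rewrite mulVf// gt_eqF.
  have a0 : 0 < q^-1 by rewrite invr_gt0.
  have b0 : 0 < II^-1 by rewrite invr_gt0.
  move: hx; rewrite -!exprVn.
  set a := q^-1 in aq a0 *; set b := II^-1 in b0 *.
  move=> hx.
  have hb : 10 * a <= b.
    have : 10 * II * a <= q * a by rewrite ler_pM2r//; lra.
    rewrite [q * a]mulrC aq => h.
    have e : II * b = 1 by rewrite /b mulfV// gt_eqF.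
    have : 10 * II * a * b <= 1 * b by rewrite ler_pM2r.
    have -> : 10 * II * a * b = 10 * a * (II * b) by ring.
    by rewrite e mulr1 mul1r.
  have -> : (a ^+ 2 * b) ^+ 2 * (3 / 10 * q) = 3 / 10 * (a ^+ 3 * b) * b * (a * q).
    by rewrite !expr2 exprS expr2; ring.
  rewrite [a * q]mulrC; rewrite [q * a]mulrC aq mulr1.
  have h3 : 0 < a ^+ 3 * b by rewrite mulr_gt0// exprn_gt0.
  apply: (@le_trans _ _ (3 * (a ^+ 4 * b))).
    by rewrite ler_pM2l// ler_pM2r.
  have -> : 3 * (a ^+ 4 * b) = 3 / 10 * (a ^+ 3 * b) * (10 * a).
    by rewrite exprS; field.
  rewrite ler_pM2l//; apply: mulr_gt0 => //; lra.
apply: ge0_le_integral => //.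
- by move=> y _; rewrite lee_fin /cL sqr_ge0.
- by apply: measurable_funS mI => //; move=> y; rewrite /= !in_itv/= /x =>
    /andP[y1 y2]; apply/andP; split; lra.
- move=> y; rewrite /= in_itv/= => /andP[y1 y2].
  rewrite lee_fin /cL expr2.
  have h1 : (q ^+ 2)^-1 / II <= ff (x - y) by apply: zr; rewrite /x; lra.
  have h2 : (q ^+ 2)^-1 / II <= ff y by apply: zr; lra.
  have c0' : 0 <= (q ^+ 2)^-1 / II by rewrite divr_ge0// ?invr_ge0 ?exprn_ge0// ltW.
  by apply: ler_pM.
Qed.

Lemma not_subexp_ff : ~ subexponential ff.
Proof.
move=> [_ [Hfin Hlim]].
move/cvgrPdist_lt: Hlim => /(_ (1/2)) H.
have h12 : (0 : R) < 1 / 2 by lra.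
move: (H h12) => {H} H.
case: Hfin => A1 [_ HA1].
case: H => A2 [_ HA2].
have IIp := II_gt0.
have [k hk] := big_k (`|A1| + `|A2| + 10 * II + 10).
set s := 4 * k%:R * c0 in hk.
have n1 := normr_ge0 A1; have n2 := normr_ge0 A2.
have l1 := ler_norm A1; have l2 := ler_norm A2.
have hq : 10 * II + 10 <= expR s.
  have := expR_ge1Dx s; lra.
have Hc := conv_lb hq.
set x := expR (s + c0) - 1 in Hc.
have hx : s + c0 <= x by rewrite /x lerBrDr addrC; exact: expR_ge1Dx.
have c0p := c0_gt0.
have Fx := HA1 x ltac:(lra).
have Rx := HA2 x ltac:(lra).
rewrite -(fineK Fx) lee_fin in Hc.
set c := fine (conv0 ff x) in Hc Rx.
have fx : 0 < ff x by apply: ff_gt0; lra.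
have : 3 / 2 <= c / (2 * ff x).
  rewrite ler_pdivlMr; last by lra.
  lra.
set r := c / (2 * ff x) in Rx *.
rewrite distrC in Rx.
have := ler_norm (r - 1).
lra.
Qed.
End Construction.

Unset Implicit Arguments.

Theorem proposition1p2 (R : realType) :
  exists f : R -> R,
    density_on_nonneg f /\ long_tailed f /\ ~ subexponential f /\
    ~ almost_decreasing f.
Proof.
exists (@ff R); split; first exact: density_ff.
split; first exact: long_tailed_ff.
split; first exact: not_subexp_ff.
exact: not_ad_ff.
Qed.
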